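(* If $G$ is a graph with girth $g(G)\ge 7$ and no isolated vertices, then $\theta(G^{[\natural 2]})=\chi_{i\mu_2}(G)=\gamma_t(G)$.
   Context: The girth is the length of a shortest cycle (infinite for forests). The exact distance-$2$ graph $G^{[\natural 2]}$ has vertex set $V(G)$, two vertices being adjacent iff their distance in $G$ equals $2$. $\theta(X)$ is the clique cover number: the minimum number of cliques partitioning $V(X)$. A set $M\subseteq V(G)$ is a $2$-distance mutual-visibility set if for every two vertices $u,v\in M$ there exists a shortest $u,v$-path of length at most $2$ none of whose internal vertices lies in $M$; it is an independent $2$-distance mutual-visibility (I2DMV) set if moreover it is independent. $\chi_{i\mu_2}(G)$ is the minimum cardinality of a partition of $V(G)$ into I2DMV sets. $\gamma_t(G)$ is the total domination number: minimum size of a set $D$ such that every vertex of $G$ has a neighbor in $D$. *)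

(* Defs.v *)
(* A finite simple graph is a symmetric irreflexive
   relation e on a finType T. *)
From mathcomp Require Import all_boot.
Set Implicit Arguments. Unset Strict Implicit. Unset Printing Implicit Defensive.

Section GraphDefs.
Variables (T : finType) (e : rel T).

Definition girth_ge7 : Prop :=
  forall s : seq T, uniq s -> cycle e s -> 3 <= size s -> 7 <= size s.

Definition no_isolated : Prop := forall v : T, exists u, e v u.

(* a u,v-path: u :: p is a path in e, ends at v, and has no repeated vertex;
   its length is size p *)
Definition upath (u v : T) (p : seq T) : bool :=
  [&& path e u p, last u p == v & uniq (u :: p)].

Definition shortest_upath (u v : T) (p : seq T) : Prop :=
  upath u v p /\ forall q, upath u v q -> size p <= size q.

Definition internal (u : T) (p : seq T) : seq T := behead (belast u p).

Definition dist_eq2 (u v : T) : Prop :=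
  exists p, shortest_upath u v p /\ size p = 2.

Definition dist2_clique (K : {set T}) : Prop :=
  forall u v, u \in K -> v \in K -> u != v -> dist_eq2 u v.

Definition mv2_set (M : {set T}) : Prop :=
  forall u v, u \in M -> v \in M ->
    exists p, [/\ shortest_upath u v p, size p <= 2 &
                  forall w, w \in internal u p -> w \notin M].

Definition independent (M : {set T}) : Prop :=
  forall u v, u \in M -> v \in M -> ~~ e u v.

Definition i2dmv_set (M : {set T}) : Prop := independent M /\ mv2_set M.

Definition total_dominating (D : {set T}) : Prop :=
  forall v : T, exists2 u, u \in D & e v u.

Definition is_min (P : nat -> Prop) (k : nat) : Prop :=
  P k /\ forall j, P j -> k <= j.

Definition clique_cover_feasible (k : nat) : Prop :=
  exists P : {set {set T}},
    [/\ partition P [set: T], (forall K, K \in P -> dist2_clique K) & #|P| = k].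

Definition i2dmv_partition_feasible (k : nat) : Prop :=
  exists P : {set {set T}},
    [/\ partition P [set: T], (forall M, M \in P -> i2dmv_set M) & #|P| = k].

Definition total_dom_feasible (k : nat) : Prop :=
  exists D : {set T}, total_dominating D /\ #|D| = k.

End GraphDefs.

(* Main.v *)
Require Import Defs.
From mathcomp Require Import all_boot.
From Stdlib Require Import Classical.
Set Implicit Arguments. Unset Strict Implicit. Unset Printing Implicit Defensive.

Definition d2 (T : finType) (e : rel T) (u v : T) : Prop :=
  [/\ u != v, ~~ e u v & exists w, e u w && e w v].

Lemma dist_eq2P (T : finType) (e : rel T) (e_sym : symmetric e)
  (e_irr : irreflexive e) u v : dist_eq2 e u v <-> d2 e u v.
Proof.
split.
- case=> p [[/and3P [Hp Hl Hu] Hmin] Hs].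
  case: p Hs Hp Hl Hu Hmin => [|a [|b [|]]] //= _.
  rewrite andbT => /andP [ua ab] /eqP <-.
  rewrite !inE negb_or => /and3P [/andP [una unb] anb _] Hmin.
  split => //.
  + apply/negP => ub.
    have := Hmin [:: b]; rewrite /upath /= ub eqxx !inE unb => /(_ isT).
    by [].
  + by exists a; rewrite ua ab.
- case=> uv nuv [w /andP [uw wv]].
  exists [:: w; v]; split => //; split.
  + rewrite /upath /= uw wv eqxx !inE !negb_or uv /=.
    have -> : u != w by apply/eqP => E; move: uw; rewrite E e_irr.
    have -> // : w != v by apply/eqP => E; move: wv; rewrite E e_irr.
  + case=> [|a [|b q]] //= /and3P [Hp Hl Hu].
    * by move: Hl Hu => /= /eqP E; move: uv; rewrite E eqxx.
    * by move: Hp Hl => /= /andP [ua _] /eqP E; move: nuv; rewrite -E ua.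
Qed.

Lemma clique_i2dmv (T : finType) (e : rel T) (e_sym : symmetric e)
  (e_irr : irreflexive e) (K : {set T}) :
  dist2_clique e K <-> i2dmv_set e K.
Proof.
split.
- move=> HK.
  have ind : independent e K.
    move=> u v uK vK; case: (eqVneq u v) => [->|uv]; first by rewrite e_irr.
    by case: (proj1 (dist_eq2P e_sym e_irr u v) (HK u v uK vK uv)).
  split => // u v uK vK.
  case: (eqVneq u v) => [<-|uv].
    exists [::]; split => //; split.
    + by rewrite /upath /= eqxx.
    + by [].
  have := HK u v uK vK uv => -[p [Hsh Hs]].
  exists p; split => //; first by rewrite Hs.
  case: p Hsh Hs => [|a [|b [|]]] // [/and3P [Hp _ _] _] _ w.
  rewrite /internal /= inE => /eqP ->.
  move: Hp => /= /andP [ua _].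
  apply/negP => aK.
  by move: (ind u a uK aK); rewrite ua.
- case=> ind mv u v uK vK uv.
  have [p [Hsh Hs _]] := mv u v uK vK.
  case: p Hsh Hs => [|a [|b [|]]] // Hsh _.
  + by case: Hsh => /and3P [_ /= /eqP E _]; move: uv; rewrite E eqxx.
  + case: Hsh => /and3P [/= /andP [ua _] /eqP E _].
    by move: (ind u v uK vK); rewrite -E ua.
  + by exists [:: a; b].
Qed.

Lemma cc_i2 (T : finType) (e : rel T) (e_sym : symmetric e)
  (e_irr : irreflexive e) k :
  clique_cover_feasible e k <-> i2dmv_partition_feasible e k.
Proof.
split; case=> P [H1 H2 H3]; exists P; split => // K KP.
- by apply/clique_i2dmv => //; apply: H2.
- by apply/(clique_i2dmv e_sym e_irr); apply: H2.
Qed.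

Lemma min_exists (P : nat -> Prop) n : P n -> exists k, is_min P k.
Proof.
move=> Pn; apply: NNPP => Hno.
suff H : forall m j, j <= m -> ~ P j by exact: (H n n (leqnn n) Pn).
elim=> [|m IH] j.
- rewrite leqn0 => /eqP -> P0; apply: Hno; exists 0; split => // j' _.
- rewrite leq_eqVlt => /orP [/eqP ->|]; last exact: IH.
  move=> Pm; apply: Hno; exists m.+1; split => // j' Pj'.
  rewrite leqNgt; apply/negP => lt; exact: (IH j' lt Pj').
Qed.

Lemma edge_neq (T : finType) (e : rel T) (e_irr : irreflexive e) x y :
  e x y -> x != y.
Proof. by move=> H; apply/eqP => E; move: H; rewrite E e_irr. Qed.

Lemma no_c4 (T : finType) (e : rel T) (e_sym : symmetric e)
  (e_irr : irreflexive e) (hg : girth_ge7 e) x y a b :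
  e x a -> e a y -> e x b -> e b y -> x != y -> a != b -> False.
Proof.
move=> xa ay xb b_y xy ab.
have := hg [:: x; a; y; b].
rewrite /= !inE !negb_or xy ab (edge_neq e_irr xa) (edge_neq e_irr xb)
  (edge_neq e_irr ay) eq_sym (edge_neq e_irr b_y) /= xa ay (e_sym y b) b_y
  (e_sym b x) xb.
by move=> /(_ isT isT isT).
Qed.

Lemma no_c3 (T : finType) (e : rel T) (e_sym : symmetric e)
  (e_irr : irreflexive e) (hg : girth_ge7 e) x y z :
  e x y -> e y z -> e z x -> False.
Proof.
move=> xy yz zx.
have := hg [:: x; y; z].
rewrite /= !inE !negb_or (edge_neq e_irr xy) (edge_neq e_irr yz)
  eq_sym (edge_neq e_irr zx) /= xy yz zx.
by move=> /(_ isT isT isT).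
Qed.

Lemma tri_d2 (T : finType) (e : rel T) (e_sym : symmetric e)
  (e_irr : irreflexive e) (hg : girth_ge7 e) x y z a :
  d2 e x y -> d2 e y z -> d2 e x z -> e x a -> e a y -> e z a.
Proof.
move=> [xy nxy _] [yz nyz [b /andP [yb bz]]] [xz nxz [c /andP [xc cz]]] xa ay.
case za: (e z a) => //.
have neq := edge_neq e_irr.
have ab : a != b by apply/eqP => E; move: za; rewrite E e_sym bz.
have ac : a != c by apply/eqP => E; move: za; rewrite E e_sym cz.
have bc : b != c.
  apply/eqP => E; apply: (no_c4 e_sym e_irr hg xa ay (b := b)) => //.
  by rewrite E. by rewrite e_sym.
have xb : x != b by apply/eqP => E; move: nxy; rewrite E e_sym yb.
have az : a != z by apply/eqP => E; move: nxz; rewrite -E xa.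
have yc : y != c by apply/eqP => E; move: nxy; rewrite E xc.
have := hg [:: x; a; y; b; z; c].
rewrite /= !inE !negb_or xy xb xz ab az ac bc yc (neq _ _ xa) (neq _ _ xc)
  (neq _ _ ay) (neq _ _ yb) (neq _ _ bz) yz.
rewrite [z == c]eq_sym (neq _ _ cz) /= xa ay yb bz (e_sym z c) cz (e_sym c x) xc.
by move=> /(_ isT isT isT).
Qed.

Lemma clique_nbr (T : finType) (e : rel T) (e_sym : symmetric e)
  (e_irr : irreflexive e) (hg : girth_ge7 e) (hiso : no_isolated e)
  (K : {set T}) x :
  dist2_clique e K -> x \in K -> exists w, forall z, z \in K -> e z w.
Proof.
move=> HK xK.
have H2 u v : u \in K -> v \in K -> u != v -> d2 e u v.
  by move=> uK vK uv; apply/(dist_eq2P e_sym e_irr); apply: HK.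
case: (pickP [pred y in K | y != x]) => [y /andP [yK yx]|none].
- have [_ _ [w /andP [xw wy]]] := H2 x y xK yK (ltac:(by rewrite eq_sym)).
  exists w => z zK.
  case: (eqVneq z x) => [->//|zx].
  case: (eqVneq z y) => [->|zy]; first by rewrite e_sym.
  by apply: (tri_d2 e_sym e_irr hg (x := x) (y := y)) => //;
    apply: H2 => //; rewrite eq_sym.
- have [w xw] := hiso x; exists w => z zK.
  by move: (none z); rewrite /= zK /= => /negbFE /eqP ->.
Qed.

Lemma cc_to_td (T : finType) (e : rel T) (e_sym : symmetric e)
  (e_irr : irreflexive e) (hg : girth_ge7 e) (hiso : no_isolated e) m :
  clique_cover_feasible e m ->
  exists D, total_dominating e D /\ #|D| <= m.
Proof.
case=> P [Hpart Hcl <-].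
case: (pickP (@predT T)) => [x0 _|T0]; last first.
  by exists set0; split => [v|]; [move: (T0 v) | rewrite cards0].
pose f (K : {set T}) := odflt x0 [pick w | [forall z in K, e z w]].
exists (f @: P); split; last exact: leq_imset_card.
move=> v.
have vc : v \in cover P by rewrite (cover_partition Hpart) inE.
set K := pblock P v.
have KP : K \in P := pblock_mem vc.
have vK : v \in K by rewrite mem_pblock.
exists (f K); first by apply: imset_f.
have [w Hw] := clique_nbr e_sym e_irr hg hiso (Hcl K KP) vK.
rewrite /f; case: pickP => [w' /forallP H /=|none].
- by move: (H v); rewrite vK.
- by move: (none w) => /forallP [] z; apply/implyP; apply: Hw.
Qed.

Lemma td_to_cc (T : finType) (e : rel T) (e_sym : symmetric e)
  (e_irr : irreflexive e) (hg : girth_ge7 e) (D : {set T}) :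
  total_dominating e D ->
  exists j, clique_cover_feasible e j /\ j <= #|D|.
Proof.
move=> HD.
pose h v := odflt v [pick u in D | e v u].
have hP v : h v \in D /\ e v (h v).
  rewrite /h; case: pickP => [u /andP [uD vu] //|none].
  by have [u uD vu] := HD v; move: (none u); rewrite /= uD vu.
clearbody h.
exists #|preim_partition h [set: T]|; split.
- exists (preim_partition h [set: T]); split => //.
    exact: preim_partitionP.
  move=> K /imsetP [x _ ->] u v.
  rewrite !inE /= => /eqP hu /eqP hv uv.
  apply/(dist_eq2P e_sym e_irr); split => //.
  + apply/negP => euv.
    have [_ uh] := hP u; have [_ vh] := hP v.
    rewrite -hu in uh; rewrite -hv in vh.
    by apply: (no_c3 e_sym e_irr hg euv vh); rewrite e_sym.
  + exists (h x); have [_ uh] := hP u; have [_ vh] := hP v.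
    by rewrite {1}hu uh /= e_sym hv vh.
- rewrite /preim_partition /equivalence_partition.
  have -> : [set [set y in [set: T] | h x == h y] | x in [set: T]] =
            [set [set y in [set: T] | u == h y] | u in [set h x | x in [set: T]]].
    by rewrite -imset_comp.
  apply: (leq_trans (leq_imset_card _ _)); apply: subset_leq_card.
  by apply/subsetP => _ /imsetP [x _ ->]; case: (hP x).
Qed.

Theorem theorem3p6 (T : finType) (e : rel T)
  (e_sym : symmetric e) (e_irr : irreflexive e)
  (hg : girth_ge7 e) (hiso : no_isolated e) :
  exists k : nat,
    [/\ is_min (clique_cover_feasible e) k,
        is_min (i2dmv_partition_feasible e) k &
        is_min (total_dom_feasible e) k].
Proof.
have feas : total_dom_feasible e #|[set: T]|.
  exists [set: T]; split => // v; have [u vu] := hiso v.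
  by exists u; rewrite ?inE.
have [k [[D0 [HD0 HD0k]] Hkmin]] := min_exists feas.
have [j [Hj jk]] := td_to_cc e_sym e_irr hg HD0.
have lb m : clique_cover_feasible e m -> k <= m.
  move=> /(cc_to_td e_sym e_irr hg hiso) [D [HD Dm]].
  apply: leq_trans Dm; apply: Hkmin; by exists D.
have ejk : j = k by apply/eqP; rewrite eqn_leq -HD0k jk /= HD0k lb.
subst j.
exists k; split.
- by split.
- split; first by apply/cc_i2.
  by move=> m /(cc_i2 e_sym e_irr) /lb.
- split => //; by exists D0.
Qed.
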